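(* In the setting of the context, the market $(S^0,S)$ admits strong $\rho$-arbitrage if and only if $\rho_1 < 0$, where $\rho_1 := \inf\{\rho(X_\pi) : \pi \in \mathbb{R}^d,\ \mathbb{E}[X_\pi] = 1\}$.
   Context: Let $(\Omega,\mathcal{F},\mathbb{P})$ be a probability space. The market consists of a riskless asset with $S^0_0 = 1$, $S^0_1 = 1+r$, $r > -1$, and $d$ risky assets $S^1,\dots,S^d$ with constants $S^i_0 > 0$ and real-valued $\mathcal{F}$-measurable $S^i_1$. Returns: $R^i := (S^i_1 - S^i_0)/S^i_0$, $R = (R^1,\dots,R^d)$. Standing assumptions: nonredundancy (if $\theta\in\mathbb{R}^{1+d}$ and $\sum_{i=0}^d \theta^i S^i_t = 0$ a.s. for $t\in\{0,1\}$ then $\theta=0$); $R^i \in L^1(\mathbb{P})$, $\mu^i := \mathbb{E}[R^i]$; $\mu^i \ne r$ for some $i$. Portfolio $\pi\in\mathbb{R}^d$ has excess return $X_\pi := \pi\cdot(R - r\mathbf{1})$. $L$ is a Riesz space with $L^\infty\subset L\subset L^1$ containing all $X_\pi$, and $\rho: L\to(-\infty,\infty]$ is monotone, cash-invariant ($\rho(X+c)=\rho(X)-c$) and positively homogeneous ($\rho(\lambda X)=\lambda\rho(X)$, $\lambda\ge0$). The market admits strong $\rho$-arbitrage if for every portfolio $\pi\in\mathbb{R}^d$ there exists $\pi'\in\mathbb{R}^d$ with $\mathbb{E}[X_{\pi'}] > \mathbb{E}[X_\pi]$ and $\rho(X_{\pi'}) < \rho(X_\pi)$. *)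

(* Defs.v *)
From HB Require Import structures.
From mathcomp Require Import all_boot all_order all_algebra.
From mathcomp Require Import all_classical all_reals all_analysis.
Set Implicit Arguments. Unset Strict Implicit. Unset Printing Implicit Defensive.
Import Order.TTheory GRing.Theory Num.Theory.
Local Open Scope classical_set_scope.
Local Open Scope ring_scope.

Section Market.
Context {R : realType} {dsp : measure_display} {T : measurableType dsp}.
Variable (P : probability T R).

Definition mkt_mean (X : T -> R) : \bar R := (\int[P]_x (X x)%:E)%E.

Definition asset_return (d : nat) (S0 : 'I_d -> R) (S1 : 'I_d -> T -> R) (i : 'I_d) : T -> R :=
  fun x => (S1 i x - S0 i) / S0 i.

Definition excess_return (d : nat) (S0 : 'I_d -> R) (S1 : 'I_d -> T -> R) (r : R)
  (pi : 'I_d -> R) : T -> R :=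
  fun x => \sum_(i < d) pi i * (asset_return S0 S1 i x - r).

Definition nonredundant (d : nat) (S0 : 'I_d -> R) (S1 : 'I_d -> T -> R) (r : R) :=
  forall (th0 : R) (th : 'I_d -> R),
    th0 * 1 + \sum_(i < d) th i * S0 i = 0 ->
    {ae P, forall x, th0 * (1 + r) + \sum_(i < d) th i * S1 i x = 0} ->
    th0 = 0 /\ (forall i, th i = 0).

(* L : a Riesz space of (representatives of) random variables with
   L^oo ⊆ L ⊆ L^1; membership depends only on the a.s. class. *)
Definition riesz_between (L : set (T -> R)) :=
  (forall X Y, L X -> L Y -> L (X \+ Y)) /\
  (forall (a : R) X, L X -> L (fun x => a * X x)) /\
  (forall X, L X -> L (fun x => Num.max (X x) 0)) /\
  (forall X : T -> R, measurable_fun setT X ->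
       (exists M : R, {ae P, forall x, `|X x| <= M}) -> L X) /\
  (forall X, L X -> P.-integrable setT (EFin \o X)) /\
  (forall X Y : T -> R, L X -> measurable_fun setT Y ->
       {ae P, forall x, X x = Y x} -> L Y).

Definition risk_measure (L : set (T -> R)) (rho : (T -> R) -> \bar R) :=
  [/\ (forall X, L X -> rho X != -oo%E),
      (forall X Y, L X -> L Y -> {ae P, forall x, X x <= Y x} ->
           (rho Y <= rho X)%E),
      (forall X (c : R), L X -> rho (fun x => X x + c) = (rho X - c%:E)%E) &
      (forall X (l : R), L X -> 0 <= l ->
           rho (fun x => l * X x) = (l%:E * rho X)%E)].

Definition strong_arbitrage (d : nat) (S0 : 'I_d -> R) (S1 : 'I_d -> T -> R)
  (r : R) (rho : (T -> R) -> \bar R) :=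
  forall pi : 'I_d -> R, exists pi' : 'I_d -> R,
    (mkt_mean (excess_return S0 S1 r pi') > mkt_mean (excess_return S0 S1 r pi))%E /\
    (rho (excess_return S0 S1 r pi') < rho (excess_return S0 S1 r pi))%E.

Definition rho_one (d : nat) (S0 : 'I_d -> R) (S1 : 'I_d -> T -> R)
  (r : R) (rho : (T -> R) -> \bar R) : \bar R :=
  ereal_inf [set rho (excess_return S0 S1 r pi) | pi in
               [set pi : 'I_d -> R | mkt_mean (excess_return S0 S1 r pi) = 1%E]].

End Market.

(* Main.v *)
Require Import Defs.
From HB Require Import structures.
From mathcomp Require Import all_boot all_order all_algebra.
From mathcomp Require Import all_classical all_reals all_analysis.
Import Order.TTheory GRing.Theory Num.Theory.
Local Open Scope classical_set_scope.
Local Open Scope ring_scope.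

Lemma er_scale (R : realType) (dsp : measure_display) (T : measurableType dsp)
  (d : nat) (r : R) (S0 : 'I_d -> R) (S1 : 'I_d -> T -> R) (l : R) (pi : 'I_d -> R) :
  excess_return S0 S1 r (fun i => l * pi i) =
  (fun x => l * excess_return S0 S1 r pi x).
Proof.
apply: funext => x; rewrite /excess_return mulr_sumr.
by apply: eq_bigr => i _; rewrite mulrA.
Qed.

Lemma mean_scale (R : realType) (dsp : measure_display) (T : measurableType dsp)
  (P : probability T R) (X : T -> R) (l : R) :
  P.-integrable setT (EFin \o X) ->
  mkt_mean P (fun x => l * X x) = (l%:E * mkt_mean P X)%E.
Proof.
move=> hX; rewrite /mkt_mean.
under eq_integral do rewrite EFinM.
exact: integralZl.
Qed.

Theorem theorem3p18 (R : realType) (dsp : measure_display)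
  (T : measurableType dsp) (P : probability T R) (d : nat)
  (r : R) (S0 : 'I_d -> R) (S1 : 'I_d -> T -> R)
  (L : set (T -> R)) (rho : (T -> R) -> \bar R) :
  -1 < r ->
  (forall i, 0 < S0 i) ->
  (forall i, measurable_fun setT (S1 i)) ->
  nonredundant P S0 S1 r ->
  (forall i, P.-integrable setT (EFin \o asset_return S0 S1 i)) ->
  (exists i, mkt_mean P (asset_return S0 S1 i) != r%:E) ->
  riesz_between P L ->
  (forall pi : 'I_d -> R, L (excess_return S0 S1 r pi)) ->
  risk_measure P L rho ->
  (strong_arbitrage P S0 S1 r rho <-> (rho_one P S0 S1 r rho < (0:R)%:E)%E).
Proof.
move=> _ _ _ _ _ _ [_ [_ [_ [_ [Lint _]]]]] LX [rhoN _ _ rhoH].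
have intX pi : P.-integrable setT (EFin \o excess_return S0 S1 r pi).
  exact: Lint.
have finM pi : mkt_mean P (excess_return S0 S1 r pi) =
    (fine (mkt_mean P (excess_return S0 S1 r pi)))%:E.
  by rewrite fineK //; apply: (integrable_fin_num _ (intX pi)).
split.
- move/(_ (fun _ => 0)) => [p [Hm Hr]].
  have X0 : excess_return S0 S1 r (fun _ => 0) = (fun _ => 0).
    by apply: funext => x; rewrite /excess_return big1 // => i _; rewrite mul0r.
  have m0 : mkt_mean P (excess_return S0 S1 r (fun _ => 0)) = 0%E.
    by rewrite X0 /mkt_mean integral0.
  have r0 : rho (excess_return S0 S1 r (fun _ => 0)) = 0%E.
    have -> : excess_return S0 S1 r (fun _ => 0) = fun x => 0 * excess_return S0 S1 r (fun _ => 0) x.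
      by apply: funext => x; rewrite mul0r X0.
    by rewrite rhoH // mul0e.
  rewrite m0 in Hm; rewrite r0 in Hr.
  set m := fine (mkt_mean P (excess_return S0 S1 r p)).
  have mE : mkt_mean P (excess_return S0 S1 r p) = m%:E by rewrite [LHS]finM.
  rewrite mE lte_fin in Hm.
  have := rhoN _ (LX p).
  case Ev: (rho (excess_return S0 S1 r p)) Hr => [v| |] //.
  rewrite lte_fin => v0 _.
  apply: (@le_lt_trans _ _ ((m^-1 * v)%:E)).
    apply: ereal_inf_lbound; exists (fun i => m^-1 * p i).
      rewrite /= er_scale mean_scale // mE -EFinM mulVf //.
      by rewrite gt_eqF.
    by rewrite er_scale rhoH // ?invr_ge0 ?ltW // Ev.
  by rewrite lte_fin pmulr_rlt0 // invr_gt0.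
- move=> /ereal_inf_lt [y [p1 /= Hm1 <-] Hr1] pi.
  have := rhoN _ (LX p1).
  case Ev: (rho (excess_return S0 S1 r p1)) Hr1 => [v| |] //.
  rewrite lte_fin => v0 _.
  set m := fine (mkt_mean P (excess_return S0 S1 r pi)).
  set w := fine (rho (excess_return S0 S1 r pi)).
  set lam := Num.max 1 (Num.max (m + 1) (`|w| / (- v) + 1)).
  have lam1 : 1 <= lam by rewrite le_max lexx.
  have lamm : m < lam.
    apply: (@lt_le_trans _ _ (m + 1)); first by rewrite ltrDl.
    by rewrite /lam !le_max lexx orbT.
  have lamw : `|w| / (- v) < lam.
    apply: (@lt_le_trans _ _ (`|w| / (- v) + 1)); first by rewrite ltrDl.
    by rewrite /lam !le_max lexx !orbT.
  have lamv : lam * v < w.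
    have nv : 0 < - v by rewrite oppr_gt0.
    rewrite ltr_pdivrMr // in lamw.
    have : - w <= `|w| by rewrite -normrN ler_norm.
    move=> h; rewrite -(opprK w) ltrNr -mulrN.
    exact: le_lt_trans h lamw.
  exists (fun i => lam * p1 i); split.
    rewrite er_scale mean_scale // Hm1 mule1 [X in (X < _)%E]finM lte_fin.
    exact: lamm.
  rewrite er_scale rhoH // ?(le_trans _ lam1) // Ev -EFinM.
  have [Ew|Ew] : rho (excess_return S0 S1 r pi) = w%:E \/ rho (excess_return S0 S1 r pi) = +oo%E.
    have := rhoN _ (LX pi); rewrite /w.
    case: (rho (excess_return S0 S1 r pi)) => [u| |] H.
    - by left.
    - by right.
    - by rewrite eqxx in H.
  - rewrite Ew lte_fin; exact: lamv.
  - rewrite Ew; exact: ltry.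
Qed.
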